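(* Let $R$ be a ring, $\mathcal{X}$ a class of left $R$-modules and $\mathcal{Y}$ a class of right $R$-modules, and assume $\mathcal{GF}_{(\mathcal{X},\mathcal{Y})}(R)$ is closed under extensions. Then a left $R$-module $M$ has a $\mathcal{Y}\otimes_R-$ exact $\mathcal{X}$-resolution if and only if it has a $\mathcal{Y}\otimes_R-$ exact $\mathcal{GF}_{(\mathcal{X},\mathcal{Y})}(R)$-resolution.
   Context: An exact sequence $\mathbb{E}$ of left modules is $\mathcal{Y}\otimes_R-$ exact if $Y\otimes_R\mathbb{E}$ is exact for all $Y\in\mathcal{Y}$. For a class $\mathcal{A}$, an $\mathcal{A}$-resolution of $M$ is an exact sequence $\cdots\to A_1\to A_0\to M\to 0$ with all $A_i\in\mathcal{A}$. $M$ is Gorenstein $(\mathcal{X},\mathcal{Y})$-flat if there is a $\mathcal{Y}\otimes_R-$ exact exact sequence $\cdots\to X_1\to X_0\to X^0\to X^1\to\cdots$ in $\mathcal{X}$ with $M\cong\ker(X^0\to X^1)$; $\mathcal{GF}_{(\mathcal{X},\mathcal{Y})}(R)$ is the class of these. *)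

(* Defs.v *)
(* Modules over a (possibly noncommutative) ring R:
   left R-modules = lmodType R, right R-modules = lmodType R^c.
   The tensor product Y (x)_R M is realised literally as the quotient of the
   free abelian group {freeg (Y * M) / int} by the subgroup generated by the
   bilinearity / balancing relations; we never build the quotient type but
   work with representatives modulo that subgroup ("trel"). *)
From HB Require Import structures.
From mathcomp Require Import all_boot all_algebra.
From mathcomp Require Import freeg.

Set Implicit Arguments.
Unset Strict Implicit.
Unset Printing Implicit Defensive.

Import GRing.Theory.
Local Open Scope ring_scope.

Definition tfree (R : pzRingType) (Y : lmodType R^c) (M : lmodType R) :=
  {freeg (Y * M)%type / int}.

Definition tgen (R : pzRingType) (Y : lmodType R^c) (M : lmodType R)
    (x : tfree Y M) : Prop :=
  (exists (y1 y2 : Y) (m : M),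
      x = << (y1 + y2, m) >> - << (y1, m) >> - << (y2, m) >>) \/
  (exists (y : Y) (m1 m2 : M),
      x = << (y, m1 + m2) >> - << (y, m1) >> - << (y, m2) >>) \/
  (exists (r : R) (y : Y) (m : M),
      (* y . r  is  (r : R^c) *: y  in the right module Y *)
      x = << ((r : R^c) *: y, m) >> - << (y, r *: m) >>).

(* x lies in the subgroup generated by the relations, i.e. x represents
   0 in Y (x)_R M *)
Definition trel (R : pzRingType) (Y : lmodType R^c) (M : lmodType R)
    (x : tfree Y M) : Prop :=
  exists s : seq (int * tfree Y M),
    foldr (fun p P => tgen p.2 /\ P) True s /\ x = \sum_(p <- s) p.2 *~ p.1.

Definition tmap (R : pzRingType) (Y : lmodType R^c) (A B : lmodType R)
    (f : A -> B) : tfree Y A -> tfree Y B :=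
  fglift (fun p : (Y * A)%type => << (p.1, f p.2) >> : tfree Y B).

Definition exact3 (R : pzRingType) (A B C : lmodType R)
    (f : {linear A -> B}) (g : {linear B -> C}) : Prop :=
  (forall a, g (f a) = 0) /\ (forall b, g b = 0 -> exists a, b = f a).

(* exactness of Y(x)A --1(x)f--> Y(x)B --1(x)g--> Y(x)C at Y(x)B *)
Definition texact3 (R : pzRingType) (Y : lmodType R^c) (A B C : lmodType R)
    (f : {linear A -> B}) (g : {linear B -> C}) : Prop :=
  (forall s : tfree Y A, trel (tmap g (tmap f s))) /\
  (forall t : tfree Y B, trel (tmap g t) ->
     exists s : tfree Y A, trel (t - tmap f s)).

(* Y(x)A --1(x)e--> Y(x)M --> 0 exact at Y(x)M (i.e. 1(x)e surjective) *)
Definition tsurj (R : pzRingType) (Y : lmodType R^c) (A M : lmodType R)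
    (e : {linear A -> M}) : Prop :=
  forall t : tfree Y M, exists s : tfree Y A, trel (t - tmap e s).

Definition lclass (R : pzRingType) := lmodType R -> Prop.
Definition rclass (R : pzRingType) := lmodType R^c -> Prop.

(* The exact sequence
   ... -> X_1 -> X_0 -> X^0 -> X^1 -> ...  is written as a chain complex
   C : int -> modules with d i : C (i+1) -> C i, so X_n = C n (n >= 0) and
   X^n = C (-n-1); the map X^0 -> X^1 is d (-2). *)
Definition GF (R : pzRingType) (X : lclass R) (Yc : rclass R) (M : lmodType R)
  : Prop :=
  exists (C : int -> lmodType R) (d : forall i : int, {linear C (i + 1) -> C i}),
    (forall i, X (C i)) /\
    (forall i, exact3 (d (i + 1)) (d i)) /\
    (forall Y, Yc Y -> forall i, texact3 Y (d (i + 1)) (d i)) /\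
    (exists h : {linear M -> C (-2 + 1)},
        injective h /\ forall c, d (-2) c = 0 <-> exists m, c = h m).

Definition has_tex_res (R : pzRingType) (Yc : rclass R) (P : lclass R)
    (M : lmodType R) : Prop :=
  exists (A : nat -> lmodType R) (d : forall n, {linear A n.+1 -> A n})
         (e : {linear A 0%N -> M}),
    (forall n, P (A n)) /\
    (forall m : M, exists a, e a = m) /\
    exact3 (d 0%N) e /\
    (forall n, exact3 (d n.+1) (d n)) /\
    (forall Y, Yc Y ->
       tsurj Y e /\ texact3 Y (d 0%N) e /\
       forall n, texact3 Y (d n.+1) (d n)).

Definition ext_closed (R : pzRingType) (P : lclass R) : Prop :=
  forall (A B C : lmodType R) (f : {linear A -> B}) (g : {linear B -> C}),
    injective f -> exact3 f g -> (forall c, exists b, g b = c) ->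
    P A -> P C -> P B.

(* Main.v *)
Require Import Defs.
From HB Require Import structures.
From mathcomp Require Import all_boot all_algebra.
From mathcomp Require Import freeg.
Set Implicit Arguments.
Unset Strict Implicit.
Unset Printing Implicit Defensive.
Import GRing.Theory.
Local Open Scope ring_scope.

Section TRel.
Variables (R : pzRingType) (Y : lmodType R^c) (M : lmodType R).
Implicit Types x y : tfree Y M.

Lemma trel0 : trel (0 : tfree Y M).
Proof. by exists [::]; rewrite big_nil. Qed.

Lemma foldr_cat_tgen (s1 s2 : seq (int * tfree Y M)) :
  foldr (fun p P => tgen p.2 /\ P) True (s1 ++ s2) <->
  foldr (fun p P => tgen p.2 /\ P) True s1 /\ foldr (fun p P => tgen p.2 /\ P) True s2.
Proof. elim: s1 => [|p s IH] /=; first tauto. move: IH; tauto. Qed.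

Lemma trelD x y : trel x -> trel y -> trel (x + y).
Proof.
move=> [s1 [H1 ->]] [s2 [H2 ->]]; exists (s1 ++ s2); split.
  by apply/foldr_cat_tgen.
by rewrite big_cat.
Qed.

Lemma trelMz x k : trel x -> trel (x *~ k).
Proof.
move=> [s [H ->]]; exists (map (fun p => (p.1 * k, p.2)) s); split.
  by elim: s H => [|p s IH] //= [? ?]; split => //; apply: IH.
rewrite big_map; elim: s {H} => [|p s IH]; first by rewrite !big_nil mul0rz.
by rewrite !big_cons mulrzDl IH mulrzA.
Qed.

Lemma trelN x : trel x -> trel (- x).
Proof. by move=> H; rewrite -mulrN1z; apply: trelMz. Qed.

Lemma trelB x y : trel x -> trel y -> trel (x - y).
Proof. by move=> ? ?; apply: trelD => //; apply: trelN. Qed.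

Lemma trel_gen x : tgen x -> trel x.
Proof. by move=> H; exists [:: (1, x)]; rewrite big_seq1 /=. Qed.

Lemma trel_sum (I : Type) (r : seq I) (F : I -> tfree Y M) :
  (forall i, trel (F i)) -> trel (\sum_(i <- r) F i).
Proof.
move=> H; elim: r => [|i r IH]; first by rewrite big_nil; apply: trel0.
by rewrite big_cons; apply: trelD.
Qed.

Lemma freeg_indZ (P : tfree Y M -> Prop) :
  P 0 -> (forall k z D, P D -> P (<< z >> *~ k + D)) -> forall D, P D.
Proof.
move=> H0 HS; apply: freeg_ind_dom0 => // k z D _ _ HD.
by rewrite -[k]intz -freegU_mulz; apply: HS.
Qed.

End TRel.

Notation tm Y f := (@tmap _ Y _ _ f).

Lemma tmap_is_additive (R : pzRingType) (Y : lmodType R^c) (A B : lmodType R)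
  (f : A -> B) : additive (tm Y f).
Proof. exact: lift_is_additive. Qed.

HB.instance Definition _ (R : pzRingType) (Y : lmodType R^c) (A B : lmodType R)
  (f : A -> B) := GRing.isAdditive.Build (tfree Y A) (tfree Y B) (tm Y f)
    (@tmap_is_additive _ Y _ _ f).

Section TMap.
Variables (R : pzRingType) (Y : lmodType R^c).

Lemma tmD (A B : lmodType R) (f : A -> B) x y : tm Y f (x + y) = tm Y f x + tm Y f y.
Proof. exact: raddfD. Qed.
Lemma tmB (A B : lmodType R) (f : A -> B) x y : tm Y f (x - y) = tm Y f x - tm Y f y.
Proof. exact: raddfB. Qed.
Lemma tmN (A B : lmodType R) (f : A -> B) x : tm Y f (- x) = - tm Y f x.
Proof. exact: raddfN. Qed.
Lemma tm0 (A B : lmodType R) (f : A -> B) : tm Y f 0 = 0.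
Proof. exact: raddf0. Qed.
Lemma tmMz (A B : lmodType R) (f : A -> B) x k : tm Y f (x *~ k) = tm Y f x *~ k.
Proof. exact: raddfMz. Qed.

Lemma tmapU (A B : lmodType R) (f : A -> B) y a :
  tm Y f << (y, a) >> = << (y, f a) >>.
Proof. by rewrite /tmap liftU scale1r. Qed.

Lemma tfree_ext (A : lmodType R) (V : zmodType)
  (phi psi : {additive tfree Y A -> V}) :
  (forall z, phi << z >> = psi << z >>) -> forall t, phi t = psi t.
Proof.
move=> H; apply: freeg_indZ; first by rewrite !raddf0.
by move=> k z D HD; rewrite !raddfD !raddfMz H HD.
Qed.

Lemma tmap_comp (A B C : lmodType R) (f : A -> B) (g : B -> C) t :
  tm Y g (tm Y f t) = tm Y (g \o f) t.
Proof.
have := @tfree_ext A _ (tm Y g \o tm Y f) (tm Y (g \o f)).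
by apply => -[y a]; rewrite /= !tmapU.
Qed.

Lemma tmap_eq (A B : lmodType R) (f g : A -> B) t :
  f =1 g -> tm Y f t = tm Y g t.
Proof.
move=> fg; apply: (@tfree_ext A _ (tm Y f) (tm Y g)) => -[y a].
by rewrite /= !tmapU fg.
Qed.

Lemma tmap_id (A : lmodType R) t : tm Y (@id A) t = t.
Proof.
apply: (@tfree_ext A _ (tm Y id) idfun) => -[y a].
by rewrite /= tmapU.
Qed.

Lemma tmap_idfun (A : lmodType R) t : tm Y (@idfun A) t = t.
Proof. exact: tmap_id. Qed.

Lemma trel_addr (A : lmodType R) (y : Y) (b1 b2 : A) :
  trel (<< (y, b1 + b2) >> - << (y, b1) >> - << (y, b2) >> : tfree Y A).
Proof. by apply: trel_gen; right; left; exists y, b1, b2. Qed.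

Lemma trel_addl (A : lmodType R) (y1 y2 : Y) (b : A) :
  trel (<< (y1 + y2, b) >> - << (y1, b) >> - << (y2, b) >> : tfree Y A).
Proof. by apply: trel_gen; left; exists y1, y2, b. Qed.

Lemma trel_scale (A : lmodType R) (r : R) (y : Y) (b : A) :
  trel (<< ((r : R^c) *: y, b) >> - << (y, r *: b) >> : tfree Y A).
Proof. by apply: trel_gen; right; right; exists r, y, b. Qed.

Lemma trel_zero (A : lmodType R) (y : Y) :
  trel (<< (y, 0) >> : tfree Y A).
Proof.
have := trelN (trel_addr y (0 : A) 0).
by rewrite addr0 subrr sub0r opprK.
Qed.

Lemma tgen_map (A B : lmodType R) (f : {linear A -> B}) (x : tfree Y A) :
  tgen x -> tgen (tm Y f x).
Proof.
case=> [[y1 [y2 [m ->]]]|[[y [m1 [m2 ->]]]|[r [y [m ->]]]]];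
  rewrite !raddfB /= !tmapU.
- by left; exists y1, y2, (f m).
- by right; left; exists y, (f m1), (f m2); rewrite linearD.
- by right; right; exists r, y, (f m); rewrite linearZ.
Qed.

Lemma tmap_rel (A B : lmodType R) (f : {linear A -> B}) t :
  trel t -> trel (tm Y f t).
Proof.
move=> [s [Hs ->]]; exists (map (fun p => (p.1, tm Y f p.2)) s); split.
  by elim: s Hs => [|q s IH] //= [Hq Hs]; split; [apply: tgen_map | apply: IH].
by rewrite raddf_sum big_map; apply: eq_bigr => p _; rewrite raddfMz.
Qed.

Lemma tmap0_rel (A B : lmodType R) (f : A -> B) t :
  (forall a, f a = 0) -> trel (tm Y f t).
Proof.
move=> f0; elim/freeg_indZ: t => [|k [y a] D HD]; first by rewrite raddf0; apply: trel0.
by rewrite raddfD raddfMz /= tmapU f0; apply: trelD => //; apply: trelMz; apply: trel_zero.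
Qed.

Lemma tmap_surj (A B : lmodType R) (f : A -> B) :
  (forall b, exists a, f a = b) -> forall t, exists s, tm Y f s = t.
Proof.
move=> fs; elim/freeg_indZ => [|k [y b] D [s Hs]]; first by exists 0; rewrite raddf0.
have [a fa] := fs b.
by exists (<< (y, a) >> *~ k + s); rewrite raddfD raddfMz /= tmapU fa Hs.
Qed.

End TMap.

Lemma I1 (V : zmodType) (x p1 p2 F P : V) : x - p1 - p2 - F = (x - P - F) + (P - p1 - p2).
Proof. rewrite [x - P - F]addrAC -[P - p1 - p2]addrA -opprD subrKA opprD !addrA.
by rewrite [x - p1 - p2 - F]addrAC [x - p1 - F]addrAC. Qed.
Lemma I2 (V : zmodType) (u x F v : V) : u - x - (- F) = (u - v) - (x - v - F).
Proof. rewrite opprK !opprB !addrA. by rewrite [u - v + F]addrAC subrK addrAC. Qed.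

Section RE.
Variables (R : pzRingType) (Y : lmodType R^c) (A B C : lmodType R).
Variables (f : {linear A -> B}) (g : {linear B -> C}).
Hypothesis gs : forall c, exists b, g b = c.
Hypothesis ex : forall b, g b = 0 -> exists a, b = f a.

Let S (t : tfree Y B) := exists s, trel (t - tm Y f s).

Let S_rel t : trel t -> S t.
Proof. by move=> H; exists 0; rewrite raddf0 subr0. Qed.

Let SD t1 t2 : S t1 -> S t2 -> S (t1 + t2).
Proof.
move=> [s1 H1] [s2 H2]; exists (s1 + s2).
by rewrite raddfD opprD addrACA; apply: trelD.
Qed.

Let SMz t k : S t -> S (t *~ k).
Proof. by move=> [s H]; exists (s *~ k); rewrite raddfMz -mulrzBl; apply: trelMz. Qed.

Let SB t1 t2 : S t1 -> S t2 -> S (t1 - t2).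
Proof. by move=> ? ?; apply: SD => //; rewrite -mulrN1z; apply: SMz. Qed.

Definition gsb (c : C) : exists b : B, g b == c.
Proof. by have [b <-] := gs c; exists b. Qed.

Definition sig (c : C) : B := xchoose (gsb c).

Let sigK c : g (sig c) = c.
Proof. exact/eqP/(xchooseP (gsb c)). Qed.

Let decomp b : exists a, b = sig (g b) + f a.
Proof.
have [a Ha] : exists a, b - sig (g b) = f a by apply: ex; rewrite linearB /= sigK subrr.
by exists a; rewrite -Ha addrC subrK.
Qed.

Let Sa t : S (t - tm Y sig (tm Y g t)).
Proof.
elim/freeg_indZ: t => [|k [y b] D HD]; first by rewrite !tm0 subrr; apply: S_rel; apply: trel0.
rewrite !tmD !tmMz !tmapU opprD addrACA -mulrzBl.
apply: SD => //; apply: SMz.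
have [a Ha] := decomp b.
exists << (y, a) >>; rewrite tmapU {1}Ha.
exact: trel_addr.
Qed.

Let Sgen x : tgen x -> S (tm Y sig x).
Proof.
case=> [[y1 [y2 [m ->]]]|[[y [m1 [m2 ->]]]|[r [y [m ->]]]]];
  rewrite !tmB !tmapU.
- by apply: S_rel; apply: trel_addl.
- have [a Ha] : exists a, sig (m1 + m2) - (sig m1 + sig m2) = f a.
    by apply: ex; rewrite linearB linearD /= !sigK subrr.
  have Hs : sig (m1 + m2) = (sig m1 + sig m2) + f a by rewrite -Ha [_ + (_ - _)]addrC subrK.
  exists << (y, a) >>; rewrite tmapU Hs (I1 _ _ _ _ << (y, sig m1 + sig m2) >>).
  by apply: trelD; apply: trel_addr.
- have [a Ha] : exists a, sig (r *: m) - r *: sig m = f a.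
    by apply: ex; rewrite linearB linearZ /= !sigK subrr.
  have Hs : sig (r *: m) = r *: sig m + f a by rewrite -Ha [_ + (_ - _)]addrC subrK.
  exists (- << (y, a) >>); rewrite tmN tmapU Hs (I2 _ _ _ << (y, r *: sig m) >>).
  by apply: trelB; [apply: trel_scale | apply: trel_addr].
Qed.

Let Srel r : trel r -> S (tm Y sig r).
Proof.
move=> [s [Hs ->]]; elim: s Hs => [|p s IH] /= Hs.
  by rewrite big_nil tm0; apply: S_rel; apply: trel0.
by case: Hs => H1 H2; rewrite big_cons tmD tmMz; apply: SD; [apply: SMz; apply: Sgen | apply: IH].
Qed.

Lemma right_exact t : trel (tm Y g t) -> exists s, trel (t - tm Y f s).
Proof.
move=> H.
have -> : t = (t - tm Y sig (tm Y g t)) + tm Y sig (tm Y g t) by rewrite subrK.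
by apply: SD; [apply: Sa | apply: Srel].
Qed.
End RE.

Lemma oddS_int (i : int) : odd (absz (i + 1)) = ~~ odd (absz i).
Proof.
case: i => [n|[|m]] //=.
- by rewrite addn1.
- by rewrite subn1 /= negbK.
Qed.

Section XGF.
Variables (R : pzRingType) (X : lclass R) (Yc : rclass R).

Definition dalt (A : lmodType R) (i : int) : {linear A -> A} :=
  if odd (absz i) then (idfun : {linear A -> A}) else (\0 : {linear A -> A}).

Lemma X_GF (A : lmodType R) : X A -> GF X Yc A.
Proof.
move=> XA.
exists (fun _ => A), (@dalt A); split => //; split; [|split].
- move=> i; rewrite /exact3 /dalt oddS_int; case: (odd (absz i)) => /=; split.
  + by [].
  + by move=> b ->; exists 0.
  + by [].
  + by move=> b _; exists b.
- move=> Y _ i; rewrite /texact3 /dalt oddS_int; case: (odd (absz i)) => /=; split.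
  + by move=> s; rewrite tmap_comp; apply: tmap0_rel.
  + by move=> t Ht; exists 0; rewrite tm0 subr0; move: Ht; rewrite tmap_idfun.
  + by move=> s; apply: tmap0_rel.
  + by move=> t _; exists t; rewrite tmap_idfun subrr; apply: trel0.
- exists (idfun : {linear A -> A}); split; first by move=> x y.
  rewrite /dalt /=; move=> c; split; first by move=> _; exists c.
  by [].
Qed.
End XGF.

Definition mklin (R : pzRingType) (U V : lmodType R) (f : U -> V) (pf : linear f) : {linear U -> V} :=
  HB.pack f (GRing.isLinear.Build R U V *:%R f pf).

Section KerT.
Variables (R : pzRingType) (V W : lmodType R) (f : {linear V -> W}).
Definition kerP : pred V := fun x => f x == 0.
Lemma kerP_closed : GRing.subsemimod_closed kerP.
Proof.
apply: GRing.submod_closed_semi; split; first by rewrite /kerP unfold_in /= raddf0.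
by move=> a u v; rewrite !unfold_in /kerP /= => /eqP fu /eqP fv; rewrite linearP fu fv scaler0 addr0.
Qed.
HB.instance Definition _ := GRing.isSubmodClosed.Build R V kerP kerP_closed.
Record kerT := KerT { kval : V; kvalP : kval \in kerP }.
HB.instance Definition _ := [isSub for kval].
HB.instance Definition _ := [Choice of kerT by <:].
HB.instance Definition _ := [SubChoice_isSubLmodule of kerT by <:].
Lemma kerT_ok (x : kerT) : f (val x) = 0.
Proof. by case: x => x /=; rewrite unfold_in => /eqP. Qed.
Definition kin (x : V) (H : f x = 0) : kerT := KerT (introT eqP H : x \in kerP).
Lemma kinE x H : val (@kin x H) = x. Proof. by []. Qed.
End KerT.

Section Factor.
Variables (R : pzRingType) (U V W : lmodType R) (h : {linear V -> W}) (phi : {linear U -> W}).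
Hypothesis Hf : forall u, exists v, phi u = h v.
Let Hex u : exists v, h v == phi u.
Proof. by have [v ->] := Hf u; exists v. Qed.
Definition factor (u : U) : V := xchoose (Hex u).
Lemma factorK u : h (factor u) = phi u.
Proof. exact/eqP/(xchooseP (Hex u)). Qed.
Lemma factor_linear : injective h -> linear factor.
Proof. by move=> hi a x y; apply: hi; rewrite linearP /= !factorK linearP. Qed.
End Factor.

Section Teq.
Variables (R : pzRingType) (Y : lmodType R^c).
Definition teq (A : lmodType R) (a b : tfree Y A) := trel (a - b).
Lemma teq_refl A (a : tfree Y A) : teq a a.
Proof. by rewrite /teq subrr; apply: trel0. Qed.
Lemma teq_sym A (a b : tfree Y A) : teq a b -> teq b a.
Proof. by rewrite /teq => /trelN; rewrite opprB. Qed.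
Lemma teq_trans A (a b c : tfree Y A) : teq a b -> teq b c -> teq a c.
Proof. by rewrite /teq => H1 H2; have := trelD H1 H2; rewrite addrA subrK. Qed.
Lemma teqD A (a b c d : tfree Y A) : teq a b -> teq c d -> teq (a + c) (b + d).
Proof. by rewrite /teq => H1 H2; have := trelD H1 H2; rewrite opprD addrACA. Qed.
Lemma teqN A (a b : tfree Y A) : teq a b -> teq (- a) (- b).
Proof. by rewrite /teq => H; have := trelN H; rewrite opprB opprK addrC. Qed.
Lemma teqB A (a b c d : tfree Y A) : teq a b -> teq c d -> teq (a - c) (b - d).
Proof. by move=> H1 H2; apply: teqD => //; apply: teqN. Qed.
Lemma teq0 A (a : tfree Y A) : teq a 0 <-> trel a.
Proof. by rewrite /teq subr0. Qed.
Lemma teq_tm (A B : lmodType R) (f : {linear A -> B}) (a b : tfree Y A) : teq a b -> teq (tm Y f a) (tm Y f b).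
Proof. by rewrite /teq -tmB; apply: tmap_rel. Qed.
Lemma teq_eq A (a b : tfree Y A) : a = b -> teq a b.
Proof. by move=> ->; apply: teq_refl. Qed.
End Teq.

Section KinLin.
Variables (R : pzRingType) (U V W : lmodType R) (f : {linear V -> W}) (F : {linear U -> V}).
Hypothesis HF : forall u, f (F u) = 0.
Definition kfun u : kerT f := kin (HF u).
Lemma kfun_linear : linear kfun.
Proof. by move=> a x y; apply: val_inj; rewrite /= !linearP. Qed.
Definition klin : {linear U -> kerT f} := mklin kfun_linear.
Lemma klinE u : val (klin u) = F u.
Proof. by []. Qed.
End KinLin.

Section PairL.
Variables (R : pzRingType) (U V1 V2 : lmodType R) (F1 : {linear U -> V1}) (F2 : {linear U -> V2}).
Definition pfun u : (V1 * V2)%type := (F1 u, F2 u).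
Lemma pfun_linear : linear pfun.
Proof. by move=> a x y; rewrite /pfun !linearP. Qed.
Definition pairL : {linear U -> (V1 * V2)%type} := mklin pfun_linear.
Lemma pairLE u : pairL u = (F1 u, F2 u).
Proof. by []. Qed.
End PairL.

Definition step_spec (R : pzRingType) (X : lclass R) (Yc : rclass R) (M X0 M' : lmodType R)
  (qq : {linear X0 -> M}) (io : {linear M' -> X0}) : Prop :=
  X X0 /\ (forall m, exists x, qq x = m) /\ injective io /\ (forall m', qq (io m') = 0) /\
  (forall x, qq x = 0 -> exists m', x = io m') /\
  (forall Y, Yc Y -> (forall t, trel (tm Y qq t) -> exists v, trel (t - tm Y io v)) /\
                     (forall v, trel (tm Y io v) -> trel v)) /\
  has_tex_res Yc (GF X Yc) M'.

Section Step.
Variables (R : pzRingType) (X : lclass R) (Yc : rclass R).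
Hypothesis ext : ext_closed (GF X Yc).
Variables (M : lmodType R) (G : nat -> lmodType R) (d : forall n, {linear G n.+1 -> G n})
  (e : {linear G 0%N -> M}).
Hypotheses (HGF : forall n, GF X Yc (G n)) (hes : forall m : M, exists a, e a = m)
  (hex0 : exact3 (d 0%N) e) (hexn : forall n, exact3 (d n.+1) (d n))
  (hY : forall Y, Yc Y -> tsurj Y e /\ texact3 Y (d 0%N) e /\ forall n, texact3 Y (d n.+1) (d n)).
Variables (C : int -> lmodType R) (dC : forall i : int, {linear C (i + 1) -> C i}).
Hypotheses (XC : forall i, X (C i)) (exC : forall i, exact3 (dC (i + 1)) (dC i))
  (texC : forall Y, Yc Y -> forall i, texact3 Y (dC (i + 1)) (dC i)).
Variable (h : {linear G 0%N -> C (-2 + 1)}).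
Hypotheses (hinj : injective h) (hker : forall c, dC (-2) c = 0 <-> exists m, c = h m).

Lemma Hp (c : C 0) : exists g, dC (-1) c = h g.
Proof. by apply/hker; exact: (exC (-2)).1 c. Qed.

Definition p : {linear C 0 -> G 0%N} :=
  mklin (@factor_linear _ (C 0) (G 0%N) (C (-2 + 1)) h (dC (-1)) Hp hinj).

Lemma pK c : h (p c) = dC (-1) c.
Proof. exact: factorK. Qed.

Lemma p_surj g : exists c, p c = g.
Proof.
have [c Hc] := (exC (-2)).2 (h g) (proj2 (hker _) (ex_intro _ g erefl)).
by exists c; apply: hinj; rewrite pK Hc.
Qed.

Lemma p0 c : p c = 0 <-> dC (-1) c = 0.
Proof.
rewrite -pK; split => [->|H]; first by rewrite raddf0.
by apply: hinj; rewrite H raddf0.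
Qed.

Definition q : {linear C 0 -> M} := e \o p.
Definition pb : {linear (C 0 * G 1%N)%type -> G 0%N} := (p \o fst) \- (d 0%N \o snd).
Definition Gpp := kerT p.
Definition L := kerT q.
Definition Lp := kerT pb.

Lemma qE x : q x = e (p x).
Proof. by []. Qed.

Lemma pbP z : pb z = p z.1 - d 0%N z.2.
Proof. by []. Qed.

Lemma Hdelta (u : C (0 + 1)) : p (dC 0 u) = 0.
Proof. by apply/p0; exact: (exC (-1)).1 u. Qed.
Definition delta : {linear C (0 + 1) -> Gpp} := klin Hdelta.

Lemma Hsigma (g : G 2) : pb (pairL (\0 : {linear G 2 -> C 0}) (d 1%N) g) = 0.
Proof. by rewrite pairLE pbP (raddf0 p) (hexn 0%N).1 subrr. Qed.
Definition sigma : {linear G 2 -> Lp} := klin Hsigma.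

Lemma Hj (w : Gpp) : pb (pairL (val : {linear Gpp -> C 0}) (\0 : {linear Gpp -> G 1%N}) w) = 0.
Proof. by rewrite pairLE pbP (raddf0 (d 0%N)) subr0 kerT_ok. Qed.
Definition jj : {linear Gpp -> Lp} := klin Hj.

Lemma pbE (z : Lp) : p (val z).1 = d 0%N (val z).2.
Proof. by apply/eqP; rewrite -subr_eq0 -pbP kerT_ok. Qed.

Lemma He' (z : Lp) : q ((fst \o val : {linear Lp -> C 0}) z) = 0.
Proof. by change (q (val z).1 = 0); rewrite qE pbE; exact: hex0.1. Qed.
Definition e' : {linear Lp -> L} := klin He'.
Definition pi2 : {linear Lp -> G 1%N} := snd \o val.

Lemma e'_surj (x : L) : exists z, e' z = x.
Proof.
have [g Hg] := hex0.2 (p (val x)) (kerT_ok x).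
have Hz : pb (val x, g) = 0 by rewrite pbP Hg subrr.
by exists (kin Hz); apply: val_inj.
Qed.

Lemma e'E z : val (e' z) = (val z).1. Proof. by []. Qed.
Lemma sigmaE g : val (sigma g) = (0, d 1%N g). Proof. by []. Qed.
Lemma jjE w : val (jj w) = (val w, 0). Proof. by []. Qed.
Lemma pi2E z : pi2 z = (val z).2. Proof. by []. Qed.
Lemma deltaE u : val (delta u) = dC 0 u. Proof. by []. Qed.

Lemma exact_sig_e' : exact3 sigma e'.
Proof.
split=> [g|z ez]; first by apply: val_inj; rewrite e'E sigmaE.
have z1 : (val z).1 = 0 by rewrite -e'E ez.
have H2 : d 0%N (val z).2 = 0 by rewrite -pbE z1 (raddf0 p).
have [g Hg] := (hexn 0%N).2 (val z).2 H2.
exists g; apply: val_inj; rewrite sigmaE -Hg -z1.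
by case: (val z).
Qed.

Lemma exact_d2_sig : exact3 (d 2%N) sigma.
Proof.
split=> [g|g sg]; first by apply: val_inj; rewrite sigmaE (hexn 1%N).1.
apply: (hexn 1%N).2.
by have := congr1 (fun z => (val z).2) sg; rewrite sigmaE.
Qed.

Lemma jj_inj : injective jj.
Proof. by move=> w1 w2 H; apply: val_inj; have := congr1 (fun z => (val z).1) H; rewrite !jjE. Qed.

Lemma exact_jj_pi2 : exact3 jj pi2.
Proof.
split=> [w|z pz]; first by rewrite pi2E jjE.
have H : p (val z).1 = 0 by rewrite pbE -pi2E pz (raddf0 (d 0%N)).
exists (kin H); apply: val_inj; rewrite jjE kinE; move: pz; rewrite pi2E.
by case: (val z) => a b /= ->.
Qed.

Lemma pi2_surj g : exists z, pi2 z = g.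
Proof.
have [c Hc] := p_surj (d 0%N g).
have Hz : pb (c, g) = 0 by rewrite pbP Hc subrr.
by exists (kin Hz).
Qed.

Lemma delta_surj w : exists u, delta u = w.
Proof.
have H : dC (-1) (val w) = 0 by apply/p0; exact: kerT_ok.
have [u Hu] := (exC (-1)).2 (val w) H.
by exists u; apply: val_inj; rewrite deltaE -Hu.
Qed.

Lemma GF_Gpp : GF X Yc Gpp.
Proof.
exists (fun i => C (i + 1)), (fun i => dC (i + 1)); split; first by move=> i; apply: XC.
split; first by move=> i; apply: exC.
split; first by move=> Y HY i; apply: texC.
exists (val : {linear Gpp -> C 0}); split; first exact: val_inj.
move=> c; split => [Hc|[m ->]]; last by apply/p0; exact: kerT_ok.
have H : p c = 0 by apply/p0.
by exists (kin H).
Qed.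

Lemma GF_Lp : GF X Yc Lp.
Proof. exact: (ext jj_inj exact_jj_pi2 pi2_surj GF_Gpp (HGF 1%N)). Qed.

Lemma q_surj m : exists c, q c = m.
Proof. by have [g <-] := hes m; have [c <-] := p_surj g; exists c. Qed.

Section TY.
Variables (Y : lmodType R^c) (HY : Yc Y).

Lemma Fi (w : tfree Y Gpp) : trel (tm Y (val : Gpp -> C 0) w) -> trel w.
Proof.
have [s <-] := tmap_surj (Y := Y) delta_surj w.
rewrite tmap_comp (@tmap_eq _ _ _ _ _ (dC 0)) => [H|u] //.
have [s' Hs'] := (texC HY 0).2 s H.
rewrite -[s](subrK (tm Y (dC (0 + 1)) s')) tmD.
apply: trelD; first exact: tmap_rel.
rewrite tmap_comp; apply: tmap0_rel => x /=.
by apply: val_inj; rewrite deltaE (exC 0).1.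
Qed.

Lemma RE1 (t : tfree Y (C 0)) : trel (tm Y q t) -> exists v, trel (t - tm Y (val : L -> C 0) v).
Proof.
apply: (right_exact (f := (val : {linear L -> C 0})) (g := q)); first exact: q_surj.
by move=> x qx; exists (kin qx).
Qed.

Lemma Chase (u : tfree Y Lp) : trel (tm Y (val : L -> C 0) (tm Y e' u)) ->
  exists s w, trel (u - tm Y sigma s - tm Y jj w).
Proof.
rewrite tmap_comp => H.
have H2 : trel (tm Y (d 0%N) (tm Y pi2 u)).
  rewrite tmap_comp (@tmap_eq _ _ _ _ _ (p \o ((val : L -> C 0) \o e'))) => [|z].
    by rewrite -tmap_comp; apply: tmap_rel.
  by change (d 0%N (val z).2 = p (val z).1); rewrite pbE.
have [s Hs] := ((hY HY).2.2 0%N).2 _ H2.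
have H3 : trel (tm Y pi2 (u - tm Y sigma s)).
  by rewrite tmB tmap_comp (@tmap_eq _ _ _ _ (pi2 \o sigma) (d 1%N)) // => g.
have [w Hw] := right_exact (f := jj) (g := pi2) pi2_surj (proj2 exact_jj_pi2) H3.
by exists s, w.
Qed.

Lemma Chase2 (u : tfree Y Lp) : trel (tm Y (val : L -> C 0) (tm Y e' u)) ->
  exists s, trel (u - tm Y sigma s).
Proof.
move=> H; have [s [w Hw]] := Chase H.
have Hv : trel (tm Y (val : Gpp -> C 0) w).
  have -> : tm Y (val : Gpp -> C 0) w = tm Y (val : L -> C 0) (tm Y e' (tm Y jj w)).
    by rewrite !tmap_comp; apply: tmap_eq.
  apply/teq0; apply: (@teq_trans _ _ _ _ (tm Y (val : L -> C 0) (tm Y e' (u - tm Y sigma s)))).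
    by apply: teq_tm; apply: teq_tm; apply: teq_sym.
  rewrite !tmB; apply/teq0; apply: trelB => //.
  by rewrite !tmap_comp; apply: tmap0_rel => g; exact: (congr1 val (proj1 exact_sig_e' g)).
have Hw0 := tmap_rel jj (Fi Hv).
by exists s; have := trelD Hw Hw0; rewrite subrK.
Qed.

Lemma Fiota (v : tfree Y L) : trel (tm Y (val : L -> C 0) v) -> trel v.
Proof.
have [u <-] := tmap_surj (Y := Y) e'_surj v.
move=> /Chase2 [s Hs].
apply/teq0; apply: (@teq_trans _ _ _ _ (tm Y e' (tm Y sigma s))).
  by apply: teq_tm.
by apply/teq0; rewrite tmap_comp; apply: tmap0_rel => g; exact: (proj1 exact_sig_e' g).
Qed.

Lemma tex_e' : texact3 Y sigma e'.
Proof.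
split=> [s|u H]; first by rewrite tmap_comp; apply: tmap0_rel => g; exact: (proj1 exact_sig_e' g).
by apply: Chase2; apply: tmap_rel.
Qed.

Lemma tex_d2_sig : texact3 Y (d 2%N) sigma.
Proof.
split=> [s|t H]; first by rewrite tmap_comp; apply: tmap0_rel => g; exact: (proj1 exact_d2_sig g).
apply: ((hY HY).2.2 1%N).2.
have := tmap_rel pi2 H; rewrite tmap_comp.
by rewrite (@tmap_eq _ _ _ _ (pi2 \o sigma) (d 1%N)).
Qed.

Lemma tsurj_e' : tsurj Y e'.
Proof. by move=> t; have [s <-] := tmap_surj (Y := Y) e'_surj t; exists s; rewrite subrr; apply: trel0. Qed.

End TY.

Definition Ap (n : nat) : lmodType R := match n with 0%N => Lp | S m => G m.+2 end.
Definition dp (n : nat) : {linear Ap n.+1 -> Ap n} :=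
  match n return {linear Ap n.+1 -> Ap n} with 0%N => sigma | S m => d m.+2 end.

Lemma res_L : has_tex_res Yc (GF X Yc) L.
Proof.
exists Ap, dp, e'; split; first by case=> [|m]; [exact: GF_Lp | exact: HGF].
split; first exact: e'_surj.
split; first exact: exact_sig_e'.
split; first by case=> [|m]; [exact: exact_d2_sig | exact: hexn].
move=> Y HY; split; first exact: tsurj_e'.
split; first exact: tex_e'.
by case=> [|m]; [exact: tex_d2_sig | exact: ((hY HY).2.2 m.+2)].
Qed.

Lemma step_ok : exists (X0 M' : lmodType R) (qq : {linear X0 -> M}) (io : {linear M' -> X0}),
  step_spec X Yc qq io.
Proof.
exists (C 0), L, q, (val : {linear L -> C 0}).
split; first exact: XC.
split; first exact: q_surj.
split; first exact: val_inj.
split; first exact: kerT_ok.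
split; first by move=> x qx; exists (kin qx).
split; last exact: res_L.
move=> Y HY; split; [exact: RE1 | exact: Fiota].
Qed.

End Step.

Lemma step_main (R : pzRingType) (X : lclass R) (Yc : rclass R) :
  ext_closed (GF X Yc) -> forall M : lmodType R, has_tex_res Yc (GF X Yc) M ->
  exists (X0 M' : lmodType R) (qq : {linear X0 -> M}) (io : {linear M' -> X0}),
    step_spec X Yc qq io.
Proof.
move=> ext M [G [d [e [HGF [hes [hex0 [hexn hY]]]]]]].
have [C [dC [XC [exC [texC [h [hinj hker]]]]]]] := HGF 0%N.
exact: (step_ok ext HGF hes hex0 hexn hY XC exC texC hinj hker).
Qed.

From Stdlib Require Import IndefiniteDescription.

Record SD (R : pzRingType) (M : lmodType R) := MkSD {
  sX : lmodType R; sM' : lmodType R; sq : {linear sX -> M}; sio : {linear sM' -> sX} }.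

Section Main.
Variables (R : pzRingType) (X : lclass R) (Yc : rclass R).
Hypothesis ext : ext_closed (GF X Yc).

Record St := MkSt { sM : lmodType R; sP : has_tex_res Yc (GF X Yc) sM }.

Lemma step_sig (s : St) : {T : SD (sM s) | step_spec X Yc (sq T) (sio T)}.
Proof.
apply: constructive_indefinite_description.
have [X0 [M' [qq [io H]]]] := step_main ext (sP s).
by exists (MkSD qq io).
Qed.

Definition next (s : St) : St :=
  MkSt (proj2_sig (step_sig s)).2.2.2.2.2.2.

Variables (M : lmodType R) (HM : has_tex_res Yc (GF X Yc) M).

Definition st (k : nat) : St := iter k next (MkSt HM).
Definition TT (k : nat) : SD (sM (st k)) := proj1_sig (step_sig (st k)).
Lemma spec k : step_spec X Yc (sq (TT k)) (sio (TT k)).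
Proof. exact: proj2_sig (step_sig (st k)). Qed.

Definition AA (k : nat) : lmodType R := sX (TT k).
Definition DD (k : nat) : {linear AA k.+1 -> AA k} := sio (TT k) \o sq (TT k.+1).
Definition EE : {linear AA 0%N -> M} := sq (TT 0%N).

Lemma DDE k a : DD k a = sio (TT k) (sq (TT k.+1) a). Proof. by []. Qed.

Lemma L1 j a : sq (TT j) (DD j a) = 0.
Proof. rewrite DDE; exact: (spec j).2.2.2.1. Qed.

Lemma L2 k b : DD k b = 0 -> sq (TT k.+1) b = 0.
Proof.
rewrite DDE => db.
by apply: (spec k).2.2.1; rewrite db raddf0.
Qed.

Lemma L3 j b : sq (TT j) b = 0 -> exists a, b = DD j a.
Proof.
move=> db; have [m' ->] := (spec j).2.2.2.2.1 b db.
have [a Ha] := (spec j.+1).2.1 m'.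
by exists a; rewrite DDE Ha.
Qed.

Lemma DD_comp k a : DD k (DD k.+1 a) = 0.
Proof. by rewrite [DD k _]DDE (L1 a) raddf0. Qed.

Section TT.
Variables (Y : lmodType R^c) (HY : Yc Y).

Lemma T1 j t : trel (tm Y (sq (TT j)) t) -> exists w, trel (t - tm Y (DD j) w).
Proof.
move=> Ht; have [v Hv] := ((spec j).2.2.2.2.2.1 Y HY).1 t Ht.
have [w Hw] := tmap_surj (Y := Y) (spec j.+1).2.1 v.
by exists w; move: Hv; rewrite -Hw tmap_comp.
Qed.

Lemma T2 j t : trel (tm Y (DD j) t) -> trel (tm Y (sq (TT j.+1)) t).
Proof.
move=> Ht.
have Ht' : trel (tm Y (sio (TT j)) (tm Y (sq (TT j.+1)) t)) by rewrite tmap_comp.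
exact: ((spec j).2.2.2.2.2.1 Y HY).2 _ Ht'.
Qed.

Lemma T3 j s : trel (tm Y (sq (TT j)) (tm Y (DD j) s)).
Proof. by rewrite tmap_comp; apply: tmap0_rel => a; exact: L1. Qed.

Lemma T4 k s : trel (tm Y (DD k) (tm Y (DD k.+1) s)).
Proof. by rewrite tmap_comp; apply: tmap0_rel => a; exact: DD_comp. Qed.
End TT.

Lemma back : has_tex_res Yc X M.
Proof.
exists AA, DD, EE; split; first by move=> n; exact: (spec n).1.
split; first exact: (spec 0%N).2.1.
split.
  split=> [a|b eb]; first exact: (@L1 0%N a).
  exact: (@L3 0%N b eb).
split.
  move=> n; split=> [a|b db]; first exact: (@DD_comp n a).
  exact: (@L3 n.+1 b (@L2 n b db)).
move=> Y HY; split.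
  move=> t; have [s <-] := tmap_surj (Y := Y) (spec 0%N).2.1 t.
  by exists s; rewrite subrr; apply: trel0.
split.
  split=> [s|t Ht]; first exact: (@T3 Y 0%N s).
  exact: (@T1 Y HY 0%N t Ht).
move=> n; split=> [s|t Ht]; first exact: (@T4 Y n s).
exact: (@T1 Y HY n.+1 t (@T2 Y HY n t Ht)).
Qed.

End Main.

Unset Implicit Arguments.

Theorem lemma2p1 (R : pzRingType) (X : lclass R) (Yc : rclass R) :
  ext_closed (GF X Yc) ->
  forall M : lmodType R,
    has_tex_res Yc X M <-> has_tex_res Yc (GF X Yc) M.
Proof.
move=> ext M; split.
  move=> [A [d [e [HX rest]]]]; exists A, d, e; split => //.
  by move=> n; apply: X_GF.
by move=> HM; exact: (back ext HM).
Qed.
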